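(* Let $G \neq \{1\}$ be a finitely generated, residually finite group, and let $\operatorname{rk}(G)$ denote the minimal number of elements generating $G$. Let $F = F(\mathcal{X})$ be a free group with basis $\mathcal{X}$ of cardinality $\operatorname{rk}(G)$, let $R \trianglelefteq F$ be a normal subgroup, and let $\pi_\star \colon F(\mathcal{X})/R \to G$ be an isomorphism. Suppose $R \neq \{1\}$, and let $r \in R \setminus \{1\}$ be an element of minimal length, where the length of an element of $F$ is the number of letters of the freely reduced word in $\mathcal{X} \cup \mathcal{X}^{-1}$ representing it. Then there exists a subgroup $F_1$ of finite index in $F$ with $R \subseteq F_1$ such that $r$ is a member of some basis of the (free) group $F_1$.
   Context: The rank of a finitely generated group is the minimal cardinality of a generating set. A basis of a free group is a free generating set. *)

(* Defs.v *)
From mathcomp Require Import all_boot all_fingroup.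
Set Implicit Arguments. Unset Strict Implicit. Unset Printing Implicit Defensive.

(* a letter (i, false) is x_i, (i, true) is x_i^{-1} *)
Definition letter (n : nat) := ('I_n * bool)%type.
Definition inv_letter n (a : letter n) : letter n := (a.1, ~~ a.2).
Definition cancels n (a b : letter n) : bool := b == inv_letter a.

Fixpoint reduced n (w : seq (letter n)) : bool :=
  match w with
  | [::] => true
  | a :: w' => reduced w' && (match w' with [::] => true | b :: _ => ~~ cancels a b end)
  end.

Definition push n (a : letter n) (w : seq (letter n)) : seq (letter n) :=
  match w with
  | [::] => [:: a]
  | b :: w' => if cancels a b then w' else a :: w
  end.

Definition reduce n (w : seq (letter n)) := foldr (@push n) [::] w.

Lemma push_reduced n (a : letter n) w : reduced w -> reduced (push a w).
Proof.
case: w => [|b w] //= Hw.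
case: ifP => Hc; first by case/andP: Hw.
by rewrite /= Hw Hc.
Qed.

Lemma reduce_reduced n (w : seq (letter n)) : reduced (reduce w).
Proof. by elim: w => [|a w IH] //=; apply: push_reduced. Qed.

Definition FG (n : nat) := {w : seq (letter n) | reduced w}.

Definition f1 n : FG n := exist _ [::] (erefl true).
Definition fmul n (u v : FG n) : FG n :=
  exist _ (reduce (proj1_sig u ++ proj1_sig v)) (reduce_reduced _).
Definition finv n (u : FG n) : FG n :=
  exist _ (reduce (rev (map (@inv_letter n) (proj1_sig u)))) (reduce_reduced _).
Definition flen n (u : FG n) : nat := size (proj1_sig u).

Definition evalF n (b : seq (FG n)) (u : FG (size b)) : FG n :=
  foldr (fun (a : letter (size b)) acc => fmul (if a.2 then finv (nth (f1 n) b a.1) else nth (f1 n) b a.1) acc)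
        (f1 n) (proj1_sig u).

Arguments evalF {n} b u.

Definition fsubgroup n (H : FG n -> Prop) : Prop :=
  H (f1 n) /\ (forall u v, H u -> H v -> H (fmul u v)) /\ (forall u, H u -> H (finv u)).

Definition fnormal n (H : FG n -> Prop) : Prop :=
  fsubgroup H /\ (forall u w, H u -> H (fmul (finv w) (fmul u w))).

Definition finite_index n (H : FG n -> Prop) : Prop :=
  exists t : seq (FG n), forall w, exists2 x, x \in t & H (fmul (finv x) w).

Definition basis_of n (H : FG n -> Prop) (b : seq (FG n)) : Prop :=
  (forall u v : FG (size b), evalF b u = evalF b v -> u = v) /\
  (forall w, H w <-> exists u : FG (size b), evalF b u = w).

Record AbsGroup := {
  gcar :> Type;
  gmul : gcar -> gcar -> gcar;
  gone : gcar;
  ginv : gcar -> gcar;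
  gmulA : forall x y z, gmul x (gmul y z) = gmul (gmul x y) z;
  gmul1 : forall x, gmul gone x = x;
  gmulV : forall x, gmul (ginv x) x = gone }.

Definition evalG (G : AbsGroup) n (g : 'I_n -> G) (u : FG n) : G :=
  foldr (fun (a : letter n) acc => gmul (if a.2 then ginv (g a.1) else g a.1) acc)
        (gone G) (proj1_sig u).

Definition generates (G : AbsGroup) (s : seq G) : Prop :=
  forall x : G, exists u : FG (size s), evalG (fun i => nth (gone G) s i) u = x.

Definition rank_eq (G : AbsGroup) (k : nat) : Prop :=
  (exists s : seq G, size s = k /\ generates s) /\
  (forall s : seq G, generates s -> k <= size s).

Definition residually_finite (G : AbsGroup) : Prop :=
  forall x : G, x <> gone G ->
    exists (gT : finGroupType) (f : G -> gT),
      (forall y z, f (gmul y z) = (f y * f z)%g) /\ f x <> 1%g.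

Definition is_hom (G : AbsGroup) n (p : FG n -> G) : Prop :=
  forall u v, p (fmul u v) = gmul (p u) (p v).

(* Main.v *)
Require Import Defs.
From mathcomp Require Import all_boot all_fingroup zify.
Set Implicit Arguments. Unset Strict Implicit. Unset Printing Implicit Defensive.

Section Words.
Variable n : nat.
Implicit Types (a b : letter n) (w x y z s : seq (letter n)).

Lemma inv_letterK a : inv_letter (inv_letter a) = a.
Proof. by case: a => i c; rewrite /inv_letter /= negbK. Qed.

Lemma cancels_inv a : cancels a (inv_letter a).
Proof. by rewrite /cancels. Qed.

Lemma reduce_id w : reduced w -> reduce w = w.
Proof.
elim: w => [|a w IH] //= /andP [Hw Hc]; rewrite IH //.
by case: w Hw Hc {IH} => [|b w] //= _ /negbTE ->.
Qed.

Lemma push_inv a w : reduced w -> push a (push (inv_letter a) w) = w.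
Proof.
case: w => [|b w] /=; first by rewrite /cancels eqxx.
move=> /andP [Hw Hc].
rewrite {1}/cancels inv_letterK; case: eqP => [Eb|Hb].
  subst b; case: w Hw Hc => [|c w] //= _ Hc; by rewrite (negbTE Hc).
by rewrite /= /cancels eqxx.
Qed.

Lemma reduce_cat x y : reduce (x ++ y) = foldr (@push n) (reduce y) x.
Proof. by rewrite /reduce foldr_cat. Qed.

Lemma foldr_push_reduced z x : reduced z -> reduced (foldr (@push n) z x).
Proof. by move=> Hz; elim: x => [|a x IH] //=; apply: push_reduced. Qed.

Lemma reduce_catr x y : reduce (x ++ reduce y) = reduce (x ++ y).
Proof. by rewrite !reduce_cat (reduce_id (reduce_reduced y)). Qed.

Lemma foldr_push_push z a x : reduced z ->
  foldr (@push n) z (push a x) = push a (foldr (@push n) z x).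
Proof.
move=> Hz; case: x => [|b x] //=; case: ifP => // /eqP ->.
by rewrite push_inv //; apply: foldr_push_reduced.
Qed.

Lemma foldr_push_reduce z x : reduced z ->
  foldr (@push n) z (reduce x) = foldr (@push n) z x.
Proof.
move=> Hz; elim: x => [|a x IH] //=.
by rewrite foldr_push_push // IH.
Qed.

Lemma reduce_catl x y : reduce (reduce x ++ y) = reduce (x ++ y).
Proof. by rewrite !reduce_cat foldr_push_reduce // reduce_reduced. Qed.

Lemma reduce_cat2 x y : reduce (reduce x ++ reduce y) = reduce (x ++ y).
Proof. by rewrite reduce_catl reduce_catr. Qed.

Lemma reduce_idem x : reduce (reduce x) = reduce x.
Proof. by rewrite reduce_id // reduce_reduced. Qed.

Lemma reduce_cons a x : reduce (a :: x) = push a (reduce x).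
Proof. by []. Qed.

Definition invw (w : seq (letter n)) := rev (map (@inv_letter n) w).

Lemma invw_cons a w : invw (a :: w) = invw w ++ [:: inv_letter a].
Proof. by rewrite /invw /= rev_cons cats1. Qed.

Lemma invw_cat x y : invw (x ++ y) = invw y ++ invw x.
Proof. by rewrite /invw map_cat rev_cat. Qed.

Lemma invw_rcons x a : invw (rcons x a) = inv_letter a :: invw x.
Proof. by rewrite -cats1 invw_cat. Qed.

Lemma invwK w : invw (invw w) = w.
Proof.
rewrite /invw map_rev revK -map_comp.
rewrite (@eq_map _ _ _ id) ?map_id // => a; by rewrite /= inv_letterK.
Qed.

Lemma reduce_cancel s W : reduce (s ++ invw s ++ W) = reduce W.
Proof.
elim: s W => [|a s IH] W //=.
rewrite invw_cons -catA /= IH /= push_inv //; exact: reduce_reduced.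
Qed.

Lemma reduce_cancel' s W : reduce (invw s ++ s ++ W) = reduce W.
Proof. by rewrite -{2}(invwK s) reduce_cancel. Qed.

Lemma reduce_invw s : reduce (invw (reduce s)) = reduce (invw s).
Proof.
elim: s => [|a s IH] //=.
have H : forall z, reduced z -> reduce (invw (push a z)) = reduce (invw z ++ [:: inv_letter a]).
  move=> [|b z] Hz /=; first by [].
  case: ifP => [/eqP ->|_]; last by rewrite invw_cons.
  rewrite invw_cons -catA /= inv_letterK -reduce_catr /=.
  by rewrite /cancels eqxx cats0.
rewrite H ?reduce_reduced // -reduce_catl IH reduce_catl invw_cons //.
Qed.

Lemma reduce_invwK s : reduced s -> reduce (invw (reduce (invw s))) = s.
Proof. by move=> Hs; rewrite reduce_invw invwK reduce_id. Qed.

Lemma reduced_catl x y : reduced (x ++ y) -> reduced x.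
Proof.
elim: x => [|a x IH] //= /andP [H1 H2]; rewrite IH //=.
by case: x H2 {IH H1} => [|b x] //=.
Qed.

Lemma reduced_catr x y : reduced (x ++ y) -> reduced y.
Proof. by elim: x => [|a x IH] //= /andP [H1 _]; apply: IH. Qed.

Lemma reduced_rcons x a : reduced x ->
  (forall x' b, x = rcons x' b -> ~~ cancels b a) -> reduced (rcons x a).
Proof.
elim: x => [|c x IH] //= /andP [Hx Hc] Hl.
apply/andP; split.
  apply: IH => // x' b E; apply: (Hl (c :: x')); by rewrite E.
case: x {IH Hx} Hc Hl => [|d x] //= _ Hl.
exact: (Hl [::] c).
Qed.

End Words.

Arguments invw {n}.

Section Walk.
Variables (n m : nat) (S : Type) (step : S -> letter n -> S)
  (psi : S -> letter n -> seq (letter m)).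
Hypothesis Hstep : forall v a, step (step v a) (inv_letter a) = v.
Hypothesis Hpsi : forall v a, psi (step v a) (inv_letter a) = invw (psi v a).

Fixpoint walk v (w : seq (letter n)) : seq (letter m) :=
  if w is a :: w' then psi v a ++ walk (step v a) w' else [::].
Fixpoint stepw v (w : seq (letter n)) : S :=
  if w is a :: w' then stepw (step v a) w' else v.

Lemma stepw_cat v x y : stepw v (x ++ y) = stepw (stepw v x) y.
Proof. by elim: x v => [|a x IH] v //=. Qed.

Lemma walk_cat v x y : walk v (x ++ y) = walk v x ++ walk (stepw v x) y.
Proof. by elim: x v => [|a x IH] v //=; rewrite IH catA. Qed.

Lemma stepw_rcons v x a : stepw v (rcons x a) = step (stepw v x) a.
Proof. by rewrite -cats1 stepw_cat. Qed.

Lemma stepw_push v a w : stepw v (push a w) = stepw v (a :: w).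
Proof. by case: w => [|b w] //=; case: ifP => // /eqP -> /=; rewrite Hstep. Qed.

Lemma stepw_reduce v w : stepw v (reduce w) = stepw v w.
Proof. by elim: w v => [|a w IH] v //=; rewrite stepw_push /= IH. Qed.

Lemma walk_push v a w : reduce (walk v (push a w)) = reduce (walk v (a :: w)).
Proof.
case: w => [|b w] //=; case: ifP => // /eqP -> /=.
by rewrite Hpsi Hstep reduce_cancel.
Qed.

Lemma walk_reduce v w : reduce (walk v (reduce w)) = reduce (walk v w).
Proof.
elim: w v => [|a w IH] v //=.
by rewrite walk_push /= -reduce_catr IH reduce_catr.
Qed.

Lemma stepw_invw v s : stepw (stepw v s) (invw s) = v.
Proof.
elim: s v => [|a s IH] v //=.
by rewrite invw_cons stepw_cat IH /= Hstep.
Qed.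

Lemma stepw_invw' v s : stepw (stepw v (invw s)) s = v.
Proof. by rewrite -{2}(invwK s) stepw_invw. Qed.

Lemma walk_invw v s : walk (stepw v s) (invw s) = invw (walk v s).
Proof.
elim: s v => [|a s IH] v //=.
rewrite invw_cons walk_cat IH stepw_invw /= Hpsi cats0 invw_cat //.
Qed.

End Walk.

Section AbsG.
Variable G : AbsGroup.
Local Notation "x * y" := (gmul x y).

Lemma gmulVr (x : G) : x * ginv x = gone G.
Proof.
have Hy : (x * ginv x) * (x * ginv x) = x * ginv x.
  by rewrite -gmulA (gmulA (ginv x)) gmulV gmul1.
by rewrite -(gmul1 (x * ginv x)) -(gmulV (x * ginv x)) -gmulA Hy.
Qed.

Lemma gmulr1 (x : G) : x * gone G = x.
Proof. by rewrite -(gmulV x) gmulA gmulVr gmul1. Qed.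

Lemma gidem (y : G) : y * y = y -> y = gone G.
Proof. by move=> Hy; rewrite -(gmulV y) -{3}Hy gmulA gmulV gmul1. Qed.

Lemma gsep (T : eqType) (ps : seq T) (x : T -> G) :
  residually_finite G ->
  (forall p, p \in ps -> x p <> gone G) ->
  exists (V : finType) (act : V -> G -> V) (o : V),
    [/\ (forall v g h, act v (g * h) = act (act v g) h),
        (forall v, act v (gone G) = v) &
        (forall p v, p \in ps -> act v (x p) <> v)].
Proof.
move=> Hrf; elim: ps => [|p ps IH] Hx.
  by exists unit, (fun v _ => v), tt; split.
case: IH => [q Hq|V [act [o [H1 H2 H3]]]].
  by apply: Hx; rewrite inE Hq orbT.
have [gT [f [Hf Hfx]]] := Hrf (x p) (Hx p (mem_head _ _)).
have Hf1 : f (gone G) = 1%g.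
  apply: (@mulgI _ (f (gone G))); by rewrite -Hf gmul1 mulg1.
exists (prod gT V), (fun sv g => (sv.1 * f g, act sv.2 g)%g), (1%g, o); split.
- by move=> [s v] g h /=; rewrite Hf mulgA H1.
- by move=> [s v] /=; rewrite Hf1 mulg1 H2.
- move=> q [s v]; rewrite inE => /orP [/eqP ->|Hq] /= [].
    by move=> E _; apply: Hfx; apply: (@mulgI _ s); rewrite E mulg1.
  by move=> _; apply: H3.
Qed.
End AbsG.

Section Schreier.
Variables (n : nat) (V : finType) (step : V -> letter n -> V).
Hypothesis Hstep : forall v a, step (step v a) (inv_letter a) = v.
Variable o : V.
Variables (t : seq (letter n)) (a0 : letter n).
Hypothesis Hred : reduced (rcons t a0).
Hypothesis Hcyc : stepw step o (rcons t a0) = o.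
Hypothesis Hdist : uniq [seq stepw step o (take k t) | k <- iota 0 (size t).+1].

Local Notation sw := (stepw step).
Local Notation state := (seq (V * seq (letter n))).

Definition st0 : state := [seq (sw o (take k t), take k t) | k <- iota 0 (size t).+1].
Definition lookup (st : state) v := nth [::] (map snd st) (index v (map fst st)).
Definition vis (st : state) v := v \in map fst st.
Definition Inv (st : state) :=
  [/\ uniq (map fst st),
      (forall v q, (v, q) \in st -> sw o q = v /\ reduced q),
      (forall v q a, (v, rcons q a) \in st -> (sw o q, q) \in st) &
      (o, [::]) \in st].
Definition grow (st : state) : state :=
  if [pick x : V * letter n | vis st x.1 && ~~ vis st (step x.1 x.2)] is Some x
  then rcons st (step x.1 x.2, rcons (lookup st x.1) x.2) else st.

Lemma lookup_in st v q : uniq (map fst st) -> (v, q) \in st -> lookup st v = q.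
Proof.
elim: st => [|[v' q'] st IH] //= /andP [Hn Hu]; rewrite inE => /orP [/eqP [-> ->]|H].
  by rewrite /lookup /= eqxx.
rewrite /lookup /=; case: eqP => [E|_]; last exact: IH.
by subst v'; case/negP: Hn; apply/mapP; exists (v, q).
Qed.

Lemma reduced_t : reduced t.
Proof. by move: Hred; rewrite -cats1 => /reduced_catl. Qed.

Lemma Inv_st0 : Inv st0.
Proof.
split.
- by rewrite /st0 -map_comp.
- move=> v q /mapP [k Hk [-> ->]]; split => //.
  by have := reduced_t; rewrite -{1}(cat_take_drop k t) => /reduced_catl.
- move=> v0 q a /mapP [k Hk [_ Eq]].
  case: k Hk Eq => [|k] Hk Eq; first by rewrite take0 in Eq; case: q Eq => [|x q].
  
  rewrite mem_iota /= in Hk.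
  have Hk' : k < size t by lia.
  rewrite (take_nth a) // in Eq.
  case: (rcons_inj Eq) => Eq' _; subst q.
  apply/mapP; exists k; rewrite ?mem_iota //; lia.
- by apply/mapP; exists 0; rewrite ?mem_iota ?take0.
Qed.

Lemma grow_sub st x : x \in st -> x \in grow st.
Proof. by rewrite /grow; case: pickP => // y _ H; rewrite mem_rcons inE H orbT. Qed.

Lemma stepw_rcons' v q a : sw v (rcons q a) = step (sw v q) a.
Proof. exact: stepw_rcons. Qed.

Lemma grow_inv st : Inv st -> Inv (grow st).
Proof.
move=> [Hu Hq Hp Ho]; rewrite /grow; case: pickP => [[v a] /= /andP [Hv Hn]|_]; last by split.
have [q Hvq] : exists q, (v, q) \in st.
  by case/mapP: Hv => [[v' q] H /= ->]; exists q.
have Hl : lookup st v = q by apply: lookup_in.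
rewrite Hl; have [Hsq Hrq] := Hq _ _ Hvq.
split.
- by rewrite map_rcons rcons_uniq Hn Hu.
- move=> w q'; rewrite mem_rcons inE => /orP [/eqP [-> ->]|H]; last exact: Hq.
  split; first by rewrite stepw_rcons' Hsq.
  apply: reduced_rcons => // x' c Ex; apply/negP => /eqP Ec.
  case/negP: Hn; rewrite Ex in Hvq Hsq.
  have := Hp _ _ _ Hvq; rewrite -Hsq stepw_rcons' Ec Hstep => H.
  by apply/mapP; exists (sw o x', x').
- move=> w q' c; rewrite !mem_rcons !inE => /orP [/eqP [_ Eq]|H].
    case: (rcons_inj Eq) => -> _; by rewrite Hsq Hvq orbT.
  by rewrite (Hp _ _ _ H) orbT.
- by rewrite mem_rcons inE Ho orbT.
Qed.

Lemma grow_closed st : (forall v a, vis st v -> vis st (step v a)) -> grow st = st.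
Proof.
move=> Hc; rewrite /grow; case: pickP => // [[v a]] /= /andP [Hv Hn].
by rewrite Hc in Hn.
Qed.

Lemma grow_cases st :
  (grow st = st /\ forall v a, vis st v -> vis st (step v a)) \/
  size (grow st) = (size st).+1.
Proof.
rewrite /grow; case: pickP => [x _|H]; first by right; rewrite size_rcons.
left; split => // v a Hv; move: (H (v, a)) => /=; rewrite Hv /=.
by move/negbFE.
Qed.

Definition stF := iter #|V| grow st0.

Lemma InvF : Inv stF.
Proof. rewrite /stF; elim: #|V| => [|k IH] /=; [exact: Inv_st0 | exact: grow_inv]. Qed.

Lemma st0_sub x : x \in st0 -> x \in stF.
Proof. rewrite /stF; elim: #|V| => [|k IH] //= H; apply: grow_sub; exact: IH. Qed.

Lemma closedF v a : vis stF v -> vis stF (step v a).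
Proof.
have Hk : forall k, (forall v a, vis (iter k grow st0) v -> vis (iter k grow st0) (step v a))
                    \/ size st0 + k <= size (iter k grow st0).
  elim=> [|k IH]; first by right; rewrite addn0.
  case: IH => [Hc|Hs].
    by left; rewrite /= grow_closed.
  case: (grow_cases (iter k grow st0)) => [[E Hc]|Hs'].
    by left; rewrite /= E.
  by right; rewrite /= Hs' addnS ltnS.
case: (Hk #|V|) => [Hc|Hs]; first exact: Hc.
exfalso; move: Hs; rewrite -/stF => Hs.
have [Hu _ _ _] := InvF.
have : #|map fst stF| <= #|V| by apply: max_card.
rewrite (card_uniqP Hu) size_map -/stF.
have : size st0 = (size t).+1 by rewrite size_map size_iota.
lia.
Qed.

Lemma vis_reach v w : vis stF v -> vis stF (sw v w).
Proof. by elim: w v => [|a w IH] v Hv //=; apply: IH; apply: closedF. Qed.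

Definition p v := lookup stF v.

Lemma p_in v : vis stF v -> (v, p v) \in stF.
Proof.
have [Hu _ _ _] := InvF.
case/mapP => [[v' q] H /= ->]; by rewrite /p (lookup_in Hu H).
Qed.

Lemma p_reduced v : reduced (p v).
Proof.
have [Hu Hq _ _] := InvF.
case: (boolP (vis stF v)) => H; first by case: (Hq _ _ (p_in H)).
rewrite /p /lookup memNindex // nth_default // !size_map //.
Qed.

Lemma p_sw v : vis stF v -> sw o (p v) = v.
Proof. have [_ Hq _ _] := InvF; by move=> H; case: (Hq _ _ (p_in H)). Qed.

Lemma vis_o : vis stF o.
Proof. have [_ _ _ Ho] := InvF; by apply/mapP; exists (o, [::]). Qed.

Lemma p_o : p o = [::].
Proof. have [Hu _ _ Ho] := InvF; exact: lookup_in. Qed.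

Lemma p_prefix k : k <= size t -> p (sw o (take k t)) = take k t.
Proof.
move=> Hk; have [Hu _ _ _] := InvF; apply: lookup_in => //; apply: st0_sub.
apply/mapP; exists k => //; rewrite mem_iota; lia.
Qed.

Lemma vis_prefix k : k <= size t -> vis stF (sw o (take k t)).
Proof. move=> Hk; rewrite -(p_prefix Hk); apply: vis_reach; exact: vis_o. Qed.

Definition tree u a := (p (step u a) == rcons (p u) a) ||
                       (p u == rcons (p (step u a)) (inv_letter a)).

Lemma tree_sym u a : tree (step u a) (inv_letter a) = tree u a.
Proof. by rewrite /tree Hstep inv_letterK orbC. Qed.


Lemma vis_u_step u a : vis stF u -> vis stF (step u a).
Proof. exact: closedF. Qed.

Definition P v : FG n := exist _ (p v) (p_reduced v).
Definition lett (a : letter n) : FG n := exist _ [:: a] (erefl true).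

Definition gam (e : V * 'I_n) : FG n :=
  fmul (fmul (P e.1) (lett (e.2, false))) (Defs.finv (P (step e.1 (e.2, false)))).

Lemma val_gam e : proj1_sig (gam e) =
  reduce (p e.1 ++ (e.2, false) :: invw (p (step e.1 (e.2, false)))).
Proof.
rewrite /gam /=. rewrite (reduce_cat2 (p e.1 ++ [:: (e.2, false)]) (invw _)).
by rewrite -catA.
Qed.

Definition estar : V * 'I_n := if a0.2 then (o, a0.1) else (sw o t, a0.1).
Definition flip e := (e == estar) && a0.2.
Definition cc e := if flip e then Defs.finv (gam e) else gam e.
Definition E := [seq e <- enum {: V * 'I_n} | vis stF e.1 && ~~ tree e.1 (e.2, false)].
Definition b := map cc E.

Lemma uniqE : uniq E.
Proof. by rewrite filter_uniq // enum_uniq. Qed.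

Lemma memE e : (e \in E) = vis stF e.1 && ~~ tree e.1 (e.2, false).
Proof. by rewrite mem_filter mem_enum andbT. Qed.

Definition sigma (e : V * 'I_n) : seq (letter (size b)) :=
  if insub (index e E) is Some j then [:: (j, flip e)] else [::].

Definition psi u (a : letter n) : seq (letter (size b)) :=
  if a.2 then invw (sigma (step u a, a.1)) else sigma (u, a.1).

Lemma Hpsi u a : psi (step u a) (inv_letter a) = invw (psi u a).
Proof.
case: a => i [] /=; rewrite /psi /=; first by rewrite invwK.
by have := Hstep u (i, false); rewrite /inv_letter /= => ->.
Qed.

Lemma sigma_in e : e \in E -> exists j : 'I_(size b),
  val j = index e E /\ sigma e = [:: (j, flip e)].
Proof.
move=> He; have Hi : index e E < size b by rewrite size_map index_mem.
by exists (Ordinal Hi); split => //; rewrite /sigma insubT /=.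
Qed.

Lemma sigma_out e : e \notin E -> sigma e = [::].
Proof.
move=> He; rewrite /sigma insubN // size_map memNindex // ltnn //.
Qed.

Lemma tree_psi u a : tree u a -> psi u a = [::].
Proof.
case: a => i [] Ht; rewrite /psi /=.
  rewrite sigma_out // memE negb_and negbK.
  have := tree_sym u (i, true); rewrite /inv_letter /= => ->.
  by rewrite Ht orbT.
by rewrite sigma_out // memE negb_and negbK Ht orbT.
Qed.

Local Notation walkV := (walk step psi).

Lemma walk_tree q : (sw o q, q) \in stF -> walkV o q = [::].
Proof.
elim/last_ind: q => [|q a IH] //= H.
have [Hu Hq Hp _] := InvF.
have Hq' := Hp _ _ _ H.
rewrite -cats1 walk_cat IH //= cats0.
apply: tree_psi; apply/orP; left.
by rewrite /p (lookup_in Hu Hq') -stepw_rcons (lookup_in Hu H).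
Qed.

Lemma walk_p v : vis stF v -> walkV o (p v) = [::].
Proof. by move=> Hv; apply: walk_tree; rewrite p_sw // p_in. Qed.

Lemma K12 e : e \in E ->
  sw o (proj1_sig (gam e)) = o /\ reduce (walkV o (proj1_sig (gam e))) = sigma e.
Proof.
case: e => u i He; have Hu : vis stF u by move: He; rewrite memE => /andP [].
have Hu' := vis_u_step (i, false) Hu.
rewrite val_gam /=; split.
  rewrite stepw_reduce // -cat1s stepw_cat //= p_sw //.
  by rewrite -{1}(p_sw Hu') stepw_invw.
rewrite walk_reduce //; last exact: Hpsi.
rewrite walk_cat walk_p //= p_sw //= -{1}(p_sw Hu') walk_invw //; last exact: Hpsi.
rewrite walk_p // /invw /= cats0.
rewrite /psi /=; have [j [_ ->]] := sigma_in He; by [].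
Qed.

Lemma K3 e (j : 'I_(size b)) : e \in E -> val j = index e E ->
  sw o (proj1_sig (cc e)) = o /\ reduce (walkV o (proj1_sig (cc e))) = [:: (j, false)].
Proof.
move=> He Hj; have [H1 H2] := K12 He.
have [j' [Hj' Hs]] := sigma_in He.
have Ej : j' = j by apply: val_inj; rewrite Hj Hj'.
subst j'; rewrite Hs in H2.
rewrite /cc; case: (flip e) H2 Hs => H2 Hs /=; last by split.
split; first by rewrite stepw_reduce // -{1}H1 stepw_invw.
rewrite walk_reduce //; last exact: Hpsi.
rewrite -{1}H1 walk_invw //; last exact: Hpsi.
by rewrite -reduce_invw H2.
Qed.

Definition e0 : V * 'I_n := (o, a0.1).

Lemma nth_b (j : 'I_(size b)) : exists e, [/\ e \in E, index e E = j & nth (f1 n) b j = cc e].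
Proof.
have Hj : j < size E by rewrite -(size_map cc); exact: ltn_ord.
exists (nth e0 E j); split.
- exact: mem_nth.
- exact: index_uniq uniqE.
- by rewrite /b (nth_map e0).
Qed.

Definition genw (a : letter (size b)) : seq (letter n) :=
  if a.2 then invw (proj1_sig (nth (f1 n) b a.1)) else proj1_sig (nth (f1 n) b a.1).

Lemma Hgenw (a : letter (size b)) : genw (inv_letter a) = invw (genw a).
Proof. by case: a => j [] //=; rewrite /genw /= invwK. Qed.

Local Notation walkU := (walk (S:=unit) (fun _ _ => tt) (fun _ a => genw a) tt).

Lemma genw_loop a : sw o (genw a) = o /\ reduce (walkV o (genw a)) = [:: a].
Proof.
case: a => j s; have [e [He Hi Hn]] := nth_b j.
have [H1 H2] := K3 He (esym Hi).
rewrite /genw /= Hn; case: s => //.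
split; first by rewrite -{1}H1 stepw_invw.
rewrite -{1}H1 walk_invw //; last exact: Hpsi.
by rewrite -reduce_invw H2.
Qed.

Lemma evalF_val (u : FG (size b)) : proj1_sig (evalF b u) = reduce (walkU (proj1_sig u)).
Proof.
rewrite /evalF; elim: (proj1_sig u) => [|a s IH] //=.
rewrite IH reduce_catr; case: a => j [] //=.
by rewrite reduce_catl.
Qed.

Lemma walkVU s : reduce (walkV o (walkU s)) = reduce s.
Proof.
elim: s => [|a s IH] //=.
have [H1 H2] := genw_loop a.
by rewrite walk_cat -reduce_catl H2 H1 /= IH.
Qed.

Lemma swU s : sw o (walkU s) = o.
Proof.
elim: s => [|a s IH] //=.
by have [H1 _] := genw_loop a; rewrite stepw_cat H1.
Qed.

Definition rho (w : FG n) : FG (size b) :=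
  exist _ (reduce (walkV o (proj1_sig w))) (reduce_reduced _).

Lemma rho_eval u : rho (evalF b u) = u.
Proof.
apply: val_inj; rewrite /= evalF_val walk_reduce; last exact: Hpsi; last by [].
by rewrite walkVU reduce_id //; case: u.
Qed.

Definition F1 (w : FG n) : Prop := sw o (proj1_sig w) = o.

Lemma genw_flip (j : 'I_(size b)) (f : bool) (g : FG n) :
  nth (f1 n) b j = (if f then Defs.finv g else g) ->
  reduce (genw (j, f)) = proj1_sig g /\
  reduce (genw (j, ~~ f)) = reduce (invw (proj1_sig g)).
Proof.
case: g => g Hg; case: f => /= Hn; rewrite /genw /= Hn /=.
  by rewrite (reduce_invwK Hg) reduce_idem.
by rewrite reduce_id.
Qed.

Lemma one_step v a : vis stF v ->
  reduce (p v ++ a :: invw (p (step v a))) = reduce (walkU (psi v a)).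
Proof.
move=> Hv; case: (boolP (tree v a)) => Ht.
  rewrite tree_psi //=; case/orP: Ht => /eqP Ep.
    rewrite Ep; have := reduce_cancel (rcons (p v) a) [::].
    by rewrite invw_rcons cats0 -!cats1 -!catA.
  rewrite Ep; have := reduce_cancel (rcons (p (step v a)) (inv_letter a)) [::].
  by rewrite invw_rcons cats0 -!cats1 -!catA /= inv_letterK.
case: a Ht => i [] Ht.
- set v' := step v (i, true).
  have Hv' : vis stF v' by apply: vis_u_step.
  have Hvv : step v' (i, false) = v by have := Hstep v (i, true); rewrite /inv_letter.
  have He : (v', i) \in E.
    rewrite memE /= Hv' /=; have := tree_sym v (i, true); rewrite /inv_letter /= => ->.
    exact: Ht.
  have [j [Hj Hs]] := sigma_in He.
  have [e [He' Hi Hn]] := nth_b j.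
  have Ee : e = (v', i) by rewrite -(nth_index e0 He') Hi Hj nth_index.
  subst e.
  have [_ H2] := genw_flip Hn.
  rewrite /psi /= Hs /invw /= cats0 /inv_letter /= H2.
  rewrite val_gam reduce_invw /= Hvv invw_cat invw_cons invwK -catA //.
- have He : (v, i) \in E by rewrite memE Hv.
  have [j [Hj Hs]] := sigma_in He.
  have [e [He' Hi Hn]] := nth_b j.
  have Ee : e = (v, i) by rewrite -(nth_index e0 He') Hi Hj nth_index.
  subst e.
  have [H1 _] := genw_flip Hn.
  by rewrite /psi /= Hs /= cats0 H1 val_gam.
Qed.

Lemma walkU_cat x y : walkU (x ++ y) = walkU x ++ walkU y.
Proof. by rewrite walk_cat; case: (stepw _ _ _). Qed.

Lemma key s v : vis stF v ->
  reduce (p v ++ s) = reduce (walkU (walkV v s) ++ p (sw v s)).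
Proof.
elim: s v => [|a s IH] v Hv /=; first by rewrite cats0.
have Hv' := vis_u_step a Hv.
set q := p (step v a).
have E1 : reduce (p v ++ a :: s) = reduce ((p v ++ a :: invw q) ++ (q ++ s)).
  have Hc : forall Z, reduce (Z ++ invw q ++ q ++ s) = reduce (Z ++ s).
    by move=> Z; rewrite -reduce_catr reduce_cancel' reduce_catr.
  have := Hc (p v ++ [:: a]); rewrite -!catA /= => <-.
  by [].
rewrite E1 -reduce_cat2 one_step // IH // reduce_cat2 walkU_cat catA //.
Qed.

Lemma F1_evalF u : F1 (evalF b u).
Proof. by rewrite /F1 evalF_val stepw_reduce // swU. Qed.

Lemma F1_image w : F1 w -> evalF b (rho w) = w.
Proof.
move=> Hw; apply: val_inj.
rewrite /= evalF_val walk_reduce //; [| by case | by move=> _ a; apply: Hgenw].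
have := key (proj1_sig w) vis_o; rewrite p_o /= Hw p_o cats0 => <-.
by rewrite reduce_id //; case: w {Hw}.
Qed.

Lemma basis_b : basis_of F1 b.
Proof.
split.
  by move=> u v Huv; rewrite -(rho_eval u) Huv rho_eval.
move=> w; split; first by move=> Hw; exists (rho w); apply: F1_image.
by case=> u <-; apply: F1_evalF.
Qed.

Lemma F1_sub : fsubgroup F1.
Proof.
rewrite /F1; split; first by [].
split.
  by move=> u v Hu Hv /=; rewrite stepw_reduce // stepw_cat Hu Hv.
move=> u Hu /=; rewrite stepw_reduce // -{1}Hu.
exact: stepw_invw.
Qed.

Lemma F1_index : finite_index F1.
Proof.
exists [seq Defs.finv (P v) | v <- enum V] => w.
set v := sw o (proj1_sig (Defs.finv w)).
have Hv : vis stF v by apply: vis_reach; exact: vis_o.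
exists (Defs.finv (P v)); first by apply: map_f; rewrite mem_enum.
rewrite /F1 /= stepw_reduce // stepw_cat.
have -> : sw o (reduce (rev [seq inv_letter i | i <- reduce (rev [seq inv_letter i | i <- p v])])) = v.
  by rewrite (reduce_invwK (p_reduced v)) p_sw.
rewrite /v /= stepw_reduce //.
exact: stepw_invw'.
Qed.

Lemma not_bad : t != [:: inv_letter a0].
Proof.
apply/eqP => Et; move: Hred; rewrite Et /= /cancels inv_letterK eqxx.
by [].
Qed.

Lemma p_t : p (sw o t) = t.
Proof. by have := p_prefix (leqnn (size t)); rewrite take_size. Qed.

Lemma vis_t : vis stF (sw o t).
Proof. by have := vis_prefix (leqnn (size t)); rewrite take_size. Qed.

Lemma estar_in : estar \in E.
Proof.
have Ea : a0 = (a0.1, a0.2) by case: a0.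
rewrite memE /estar; case Es: a0.2 => /=.
- rewrite vis_o /= /tree p_o.
  have Hs : step o (a0.1, false) = sw o t.
    by have := Hstep (sw o t) a0; rewrite -stepw_rcons Hcyc /inv_letter Es /=.
  rewrite Hs p_t /= negb_or; apply/andP; split.
    apply/negP => /eqP Et; case/negP: not_bad; by rewrite Et /inv_letter Es.
  by apply/negP => /eqP /(congr1 size); rewrite size_rcons.
- rewrite vis_t /= /tree p_t.
  have Hs : step (sw o t) (a0.1, false) = o.
    have E2 : (a0.1, false) = a0 by rewrite {2}Ea Es.
    by rewrite E2 -stepw_rcons Hcyc.
  rewrite Hs p_o /= negb_or; apply/andP; split.
    by apply/negP => /eqP /(congr1 size); rewrite size_rcons.
  apply/negP => /eqP Et; case/negP: not_bad; by rewrite Et /inv_letter Es /= eqxx.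
Qed.

Lemma val_finv (x : FG n) : proj1_sig (Defs.finv x) = reduce (invw (proj1_sig x)).
Proof. by []. Qed.

Lemma val_gam' u i : proj1_sig (gam (u, i)) =
  reduce (p u ++ (i, false) :: invw (p (step u (i, false)))).
Proof. exact: (val_gam (u, i)). Qed.

Lemma cc_estar : proj1_sig (cc estar) = rcons t a0.
Proof.
have Ea : a0 = (a0.1, a0.2) by case: a0.
rewrite /cc /flip eqxx andTb; case: ifP => Es.
- have Hs : step o (a0.1, false) = sw o t.
    by have := Hstep (sw o t) a0; rewrite -stepw_rcons Hcyc /inv_letter Es /=.
  have E2 : inv_letter (a0.1, false) = a0 by rewrite {2}Ea Es.
  by rewrite /estar Es val_finv val_gam' Hs p_t p_o reduce_invw invw_cons invwK cats1 E2 reduce_id.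
- have Hs : step (sw o t) (a0.1, false) = o.
    have E2 : (a0.1, false) = a0 by rewrite {2}Ea Es.
    by rewrite E2 -stepw_rcons Hcyc.
  have E2 : (a0.1, false) = a0 by rewrite {2}Ea Es.
  rewrite /estar Es val_gam' Hs p_t p_o E2 /= cats1 reduce_id //.
Qed.

Lemma schreier_main :
  [/\ fsubgroup F1, finite_index F1 &
      exists2 b : seq (FG n), basis_of F1 b & cc estar \in b].
Proof.
split; [exact: F1_sub | exact: F1_index |].
exists b; first exact: basis_b.
by apply: map_f; exact: estar_in.
Qed.

End Schreier.

Definition letF n (a : letter n) : FG n := exist _ [:: a] (erefl true).

Section Main.
Variables (G : AbsGroup) (n : nat) (pi : FG n -> G).
Hypothesis Hpi : is_hom pi.

Definition gprod (s : seq (letter n)) : G :=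
  foldr (fun a g => gmul (pi (letF a)) g) (gone G) s.

Lemma pi_f1 : pi (f1 n) = gone G.
Proof.
apply: gidem; rewrite -Hpi; congr pi; exact: val_inj.
Qed.

Lemma pi_gprod s (Hs : reduced s) : pi (exist _ s Hs) = gprod s.
Proof.
elim: s Hs => [|a s IH] Hs /=.
  by rewrite -pi_f1; congr pi; apply: val_inj.
have Hs' : reduced s by case/andP: Hs.
rewrite -(IH Hs') -Hpi; congr pi; apply: val_inj => /=.
by rewrite -reduce_cons reduce_id.
Qed.

Lemma pi_gprod' (w : FG n) : pi w = gprod (proj1_sig w).
Proof. by case: w => s Hs; apply: pi_gprod. Qed.

End Main.

Theorem lemma2 (G : AbsGroup) (n : nat)
  (HG1 : exists x : G, x <> gone G)
  (Hrf : residually_finite G)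
  (Hrk : rank_eq G n)
  (R : FG n -> Prop) (HR : fnormal R)
  (pi : FG n -> G) (Hpi : is_hom pi)
  (Hsurj : forall x : G, exists w, pi w = x)
  (Hker : forall w, pi w = gone G <-> R w)
  (HR1 : exists w, R w /\ w <> f1 n)
  (r : FG n) (Hr : R r) (Hr1 : r <> f1 n)
  (Hmin : forall s, R s -> s <> f1 n -> flen r <= flen s) :
  exists F1 : FG n -> Prop,
    [/\ fsubgroup F1, finite_index F1, (forall w, R w -> F1 w) &
        exists2 b : seq (FG n), basis_of F1 b & r \in b].
Proof.
have Hrne : proj1_sig r <> [::].
  by move=> E; apply: Hr1; apply: val_inj; rewrite /= E.
have [t [a0 Ert]] : exists t a0, proj1_sig r = rcons t a0.
  by case/lastP: (proj1_sig r) Hrne => [|t a0] // _; exists t, a0.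
have Hred : reduced (rcons t a0) by rewrite -Ert; case: r {Hr Hr1 Hmin Hrne Ert}.
have Htred : reduced t by move: Hred; rewrite -cats1 => /reduced_catl.
set L := (size t).+1.
set ps := [seq km <- [seq (k, m) | k <- iota 0 L, m <- iota 0 L] | km.1 < km.2].
set x := fun km : nat * nat => gprod pi (drop km.1 (take km.2 t)).
have Hx : forall km, km \in ps -> x km <> gone G.
  move=> [k m]; rewrite mem_filter => /andP [Hkm Hin]; rewrite /= in Hkm.
  have Hm : m <= size t.
    have [[k' m'] [_ Hm' E]] := allpairsP Hin.
    case: E => _ ->; move: Hm'; rewrite mem_iota /L /=; lia.
  set d := drop k (take m t).
  have Hd : reduced d.
    have := Htred; rewrite -{1}(cat_take_drop m t) => /reduced_catl.
    by rewrite -{1}(cat_take_drop k (take m t)) => /reduced_catr.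
  have Hsz : size d = m - k by rewrite /d size_drop size_takel.
  rewrite /x /= -/d => Hg.
  have HR' : R (exist _ d Hd) by apply/Hker; rewrite (pi_gprod Hpi).
  have Hne : exist _ d Hd <> f1 n.
    move=> E; have := congr1 (fun w => size (proj1_sig w)) E; rewrite /= Hsz; lia.
  have := Hmin _ HR' Hne; rewrite /flen /= Ert size_rcons Hsz; lia.
have [V [act [o [H1 H2 H3]]]] := gsep Hrf Hx.
set step := fun v (a : letter n) => act v (pi (letF a)).
have Hstep : forall v a, step (step v a) (inv_letter a) = v.
  move=> v a; rewrite /step -H1 -Hpi.
  have -> : fmul (letF a) (letF (inv_letter a)) = f1 n.
    by apply: val_inj; rewrite /= /cancels eqxx.
  by rewrite (pi_f1 Hpi) H2.
have Hsw : forall v s, stepw step v s = act v (gprod pi s).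
  move=> v s; elim: s v => [|a s IH] v /=; first by rewrite H2.
  by rewrite IH -H1.
have Hcyc : stepw step o (rcons t a0) = o.
  by rewrite Hsw -Ert -(pi_gprod' Hpi) (proj2 (Hker r) Hr) H2.
have Hdist : uniq [seq stepw step o (take k t) | k <- iota 0 (size t).+1].
  rewrite map_inj_in_uniq ?iota_uniq // => k m Hk Hm E.
  have key : forall k m, k < m -> m < L -> stepw step o (take k t) <> stepw step o (take m t).
    move=> k' m' Hkm HmL.
    rewrite -(cat_take_drop k' (take m' t)) take_takel; last lia.
    rewrite stepw_cat [X in _ <> X]Hsw.
    apply: not_eq_sym; apply: (H3 (k', m')).
    rewrite mem_filter; apply/andP; split; first exact: Hkm.
    apply: (allpairs_f pair); rewrite mem_iota; lia.
  rewrite mem_iota in Hk; rewrite mem_iota in Hm.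
  case: (ltngtP k m) => // Hc; exfalso.
    by apply: (key k m Hc _ E); rewrite /L; lia.
  by apply: (key m k Hc _ (esym E)); rewrite /L; lia.
have [Hsub Hidx [b Hb Hin]] := schreier_main Hstep Hred Hcyc Hdist.
exists (F1 step o); split => //.
  move=> w Hw; rewrite /F1 Hsw -(pi_gprod' Hpi) (proj2 (Hker w) Hw) H2 //.
exists b => //.
have <- : cc Hstep Hred Hdist (estar step o t a0) = r.
  by apply: val_inj; rewrite /= (cc_estar Hstep Hred Hcyc Hdist) Ert.
exact: Hin.
Qed.
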